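(* Consider the averaged boost converter $-L\dot I=(1-u)V-V_s$, $C\dot V=(1-u)I-GV$ with scalar constants $L>0$, $C>0$, $G\ge0$, $V_s\in\mathbb{R}$, extended by $\dot u=\upsilon$ (state $(I,V,\dot I,\dot V,u)$, input $\upsilon$). Then this system is passive with respect to the storage function $S=\tfrac12L\dot I^2+\tfrac12C\dot V^2$ and the port-variables $\dot u$ and $\dot IV-\dot VI$, i.e. $\dot S\le\dot u(\dot IV-\dot VI)$.
   Context: $I$ is the inductor current, $V$ the capacitor voltage, $u\in[0,1]$ the duty cycle (averaged model). *)

(* Defs.v *)
From Stdlib Require Import Reals.
From Coquelicot Require Import Coquelicot.
Open Scope R_scope.

Definition storage (L C : R) (dI dV : R -> R) (t : R) : R :=
  1/2 * L * (dI t)^2 + 1/2 * C * (dV t)^2.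

(* Main.v *)
Require Import Defs.
From Stdlib Require Import Reals Lra.
From Coquelicot Require Import Coquelicot.
Open Scope R_scope.

Theorem lemma3 (L C G Vs : R) (HL : 0 < L) (HC : 0 < C) (HG : 0 <= G)
  (I V u dI dV ups : R -> R) :
  (forall t, is_derive I t (dI t)) ->
  (forall t, is_derive V t (dV t)) ->
  (forall t, is_derive u t (ups t)) ->
  (forall t, - L * dI t = (1 - u t) * V t - Vs) ->
  (forall t, C * dV t = (1 - u t) * I t - G * V t) ->
  forall t, ex_derive (storage L C dI dV) t /\
    Derive (storage L C dI dV) t <= ups t * (dI t * V t - dV t * I t).
Proof.
  intros HI HV Hu EI EV t.
  assert (FI : forall s, dI s = - ((1 - u s) * V s - Vs) / L).
  { intros s. rewrite <- EI. field. lra. }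
  assert (FV : forall s, dV s = ((1 - u s) * I s - G * V s) / C).
  { intros s. rewrite <- EV. field. lra. }
  set (l := L * dI t * (- (- ups t * V t + (1 - u t) * dV t) / L)
           + C * dV t * ((- ups t * I t + (1 - u t) * dI t - G * dV t) / C)).
  assert (D : is_derive (storage L C dI dV) t l).
  { apply is_derive_ext with
      (f := fun s => 1/2 * L * (- ((1 - u s) * V s - Vs) / L)^2
                   + 1/2 * C * (((1 - u s) * I s - G * V s) / C)^2).
    { intros s. unfold storage. rewrite FI, FV. reflexivity. }
    auto_derive.
    - repeat split; eexists; eauto.
    - replace (Derive (fun x => I x) t) with (dI t) by (symmetry; apply is_derive_unique; apply HI).
      replace (Derive (fun x => V x) t) with (dV t) by (symmetry; apply is_derive_unique; apply HV).
      replace (Derive (fun x => u x) t) with (ups t) by (symmetry; apply is_derive_unique; apply Hu).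
      unfold l. rewrite (FI t), (FV t). field. lra. }
  split.
  - eexists; exact D.
  - rewrite (is_derive_unique _ _ _ D). unfold l.
    assert (0 <= G * (dV t * dV t)) by (apply Rmult_le_pos; [lra| apply Rle_0_sqr]).
    assert (E: l = ups t * (dI t * V t - dV t * I t) - G * (dV t * dV t)).
    { unfold l. field. lra. }
    fold l. lra.
Qed.
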